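(* Let $t>0$ and $k\in\mathbb{N}$. For all $(y_1,\dots,y_{k+1})\in\mathbb{R}^{k+1}$, $$-\sum_{j=1}^k\mathbf{H}_t(y_{j+1}-y_j)\leq-\sum_{j=1}^k\mathbf{H}_t^{j,k+1}(y_{k+1}-y_j).$$
   Context: $\mathbf{H}_t(x)=e^{t^{1/3}x}$, and for integers $1\leq j<n$, $\mathbf{H}_t^{j,n}(x)=(n-1)^{-1}e^{t^{1/3}x/(n-j)}$. *)

(* Defs.v *)
From Stdlib Require Import Reals.
Open Scope R_scope.

Definition Ht (t x : R) : R := exp (Rpower t (1/3) * x).

Definition Htjn (t : R) (j n : nat) (x : R) : R :=
  / INR (n - 1) * exp (Rpower t (1/3) * x / INR (n - j)).

Definition sum1 (k : nat) (f : nat -> R) : R :=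
  List.fold_right Rplus 0 (List.map f (List.seq 1 k)).

(* Main.v *)
Require Import Defs.
From Stdlib Require Import Reals Lra Lia Psatz.
Open Scope R_scope.

Fixpoint Sm (f : nat -> R) (n : nat) : R :=
  match n with O => 0 | S n => Sm f n + f n end.

Lemma Sm_ext f g n : (forall i, (i < n)%nat -> f i = g i) -> Sm f n = Sm g n.
Proof. induction n; simpl; intros H; auto. rewrite IHn; [rewrite H|]; auto; intros; apply H; lia. Qed.

Lemma Sm_le f g n : (forall i, (i < n)%nat -> f i <= g i) -> Sm f n <= Sm g n.
Proof. induction n; simpl; intros H; [lra|]. assert (H1 := H n (Nat.lt_succ_diag_r n)).
  assert (Sm f n <= Sm g n) by (apply IHn; intros; apply H; lia). lra. Qed.

Lemma Sm_nonneg g n : (forall i, 0 <= g i) -> 0 <= Sm g n.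
Proof. induction n; simpl; intros H; [lra|]. specialize (IHn H). specialize (H n). lra. Qed.

Lemma Sm_term g n i : (i < n)%nat -> (forall i, 0 <= g i) -> g i <= Sm g n.
Proof. induction n; simpl; intros Hi H; [lia|].
  destruct (Nat.eq_dec i n) as [->|Hne].
  - assert (0 <= Sm g n) by (apply Sm_nonneg; auto). lra.
  - assert (g i <= Sm g n) by (apply IHn; auto; lia). specialize (H n). lra. Qed.

Lemma Sm_const a n : Sm (fun _ => a) n = INR n * a.
Proof. induction n; simpl Sm; [simpl; lra|]. rewrite IHn, S_INR. lra. Qed.

Lemma Sm_shift g n : Sm g (S n) = g O + Sm (fun i => g (S i)) n.
Proof. induction n. simpl; lra. change (Sm g (S (S n))) with (Sm g (S n) + g (S n)).
  rewrite IHn. simpl. lra. Qed.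

Lemma fold_Sm f s n : List.fold_right Rplus 0 (List.map f (List.seq s n)) = Sm (fun i => f (s + i)%nat) n.
Proof. revert s; induction n; intros s; [reflexivity|]. cbn [List.seq List.map List.fold_right].
  rewrite IHn. rewrite (Sm_shift (fun i => f (s+i)%nat)). rewrite Nat.add_0_r.
  rewrite (Sm_ext (fun i => f (S s + i)%nat) (fun i => f (s + S i)%nat)). lra.
  intros; f_equal; lia. Qed.

Lemma sum1_Sm k f : sum1 k f = Sm (fun i => f (S i)) k.
Proof. unfold sum1. rewrite fold_Sm. reflexivity. Qed.

Lemma tele y j m : Sm (fun i => y (j + i + 1)%nat - y (j + i)%nat) m = y (j + m)%nat - y j.
Proof. induction m; simpl Sm. rewrite Nat.add_0_r; lra.
  rewrite IHm. replace (j + m + 1)%nat with (j + S m)%nat by lia. lra. Qed.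

Lemma avg_ex a m : (1 <= m)%nat -> exists i, (i < m)%nat /\ Sm a m <= INR m * a i.
Proof. induction m; intros Hm; [lia|].
  destruct (Nat.eq_dec m 0) as [->|Hne].
  - exists O; split; [lia|]. simpl. lra.
  - destruct IHm as [i [Hi Hle]]; [lia|].
    destruct (Rle_dec (Sm a (S m)) (INR (S m) * a m)) as [H|H].
    + exists m; split; [lia|exact H].
    + exists i; split; [lia|]. simpl Sm in *. rewrite S_INR in *.
      assert (Hp : 0 < INR m) by (apply lt_0_INR; lia).
      assert (a m < a i) by nra. nra. Qed.

Lemma exp_mono x y : x <= y -> exp x <= exp y.
Proof. intros [H|H]; [left; apply exp_increasing; auto|right; rewrite H; auto]. Qed.

Theorem mainTheorem11 (t : R) (k : nat) (y : nat -> R) :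
  0 < t ->
  - sum1 k (fun j => Ht t (y (S j) - y j))
  <= - sum1 k (fun j => Htjn t j (S k) (y (S k) - y j)).
Proof.
  intros Ht0. apply Ropp_le_contravar.
  set (c := Rpower t (1/3)).
  assert (Hc : 0 < c) by (unfold c, Rpower; apply exp_pos).
  rewrite !sum1_Sm. unfold Ht, Htjn. fold c.
  set (E := Sm (fun i => exp (c * (y (S (S i)) - y (S i)))) k).
  destruct (Nat.eq_dec k 0) as [Hk0|Hk]; [subst k; unfold E; simpl Sm; lra|].
  replace (S k - 1)%nat with k by lia.
  assert (Hkp : 0 < INR k) by (apply lt_0_INR; lia).
  apply Rle_trans with (Sm (fun _ => / INR k * E) k).
  - apply Sm_le. intros j Hj.
    apply Rmult_le_compat_l; [left; apply Rinv_0_lt_compat; auto|].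
    set (m := (S k - S j)%nat).
    destruct (avg_ex (fun i => y (S j + i + 1)%nat - y (S j + i)%nat) m) as [i [Hi Hle]]; [unfold m; lia|].
    rewrite tele in Hle. replace (S j + m)%nat with (S k) in Hle by (unfold m; lia).
    assert (Hmp : 0 < INR m) by (apply lt_0_INR; unfold m; lia).
    apply Rle_trans with (exp (c * (y (S j + i + 1)%nat - y (S j + i)%nat))).
    + apply exp_mono.
      apply Rmult_le_reg_r with (INR m); auto.
      unfold Rdiv. rewrite Rmult_assoc, Rinv_l by lra. nra.
    + replace (S j + i + 1)%nat with (S (S (j + i))) by lia.
      replace (S j + i)%nat with (S (j + i)) by lia.
      unfold E. apply (Sm_term (fun i => exp (c * (y (S (S i)) - y (S i))))).
      unfold m in Hi; lia. intros; left; apply exp_pos.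
  - rewrite Sm_const. right. field. lra.
Qed.
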